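(* Let $r\in\mathbb{N}$ be fixed and let $\chi:\mathbb{R}_+\to\mathbb{R}$ be a kernel (in the sense described in the context). Then for every bounded, locally integrable function $f:\mathbb{R}_+\to\mathbb{R}$, $$\lim_{w\to\infty}\left(E_{w,r}^{\chi}f\right)(x)=f(x)$$ holds at every point $x\in\mathbb{R}_+$ at which $f$ is continuous. Furthermore, if $f\in\mathcal{C}(\mathbb{R}_+)$, then $$\lim_{w\to\infty}\left\|E_{w,r}^{\chi}f-f\right\|_\infty=0.$$
   Context: $\mathbb{R}_+=(0,\infty)$. A kernel is a continuous function $\chi:\mathbb{R}_+\to\mathbb{R}$ such that: (1) $\int_{\mathbb{R}_+}|\chi(x)|\frac{dx}{x}<\infty$ and $\chi$ is bounded on $[1/e,e]$; (2) $\sum_{k\in\mathbb{Z}}\chi(e^{-k}u)=1$ for every $u\in\mathbb{R}_+$, and $M_0(\chi):=\sup_{u\in\mathbb{R}_+}\sum_{k\in\mathbb{Z}}|\chi(e^{-k}u)|<+\infty$; (3) $\lim_{\gamma\to\infty}\sum_{|k-\log u|>\gamma}|\chi(e^{-k}u)|=0$ uniformly with respect to $u\in\mathbb{R}_+$. For $r\in\mathbb{N}$, $w>0$ and a locally integrable $f:\mathbb{R}_+\to\mathbb{R}$, the Mellin–Steklov exponential sampling operator of order $r$ is $$\left(E_{w,r}^{\chi}f\right)(x):=\sum_{k\in\mathbb{Z}}\chi(e^{-k}x^{w})\, w^{r}\int_1^{e^{1/w}}\!\!\cdots\!\int_1^{e^{1/w}}\sum_{m=1}^{r}(-1)^{1-m}\binom{r}{m}f\!\left(e^{k/w}(t_1\cdots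 t_r)^{m/r}\right)\frac{dt_1}{t_1}\cdots\frac{dt_r}{t_r},\quad x\in\mathbb{R}_+.$$ $CB(\mathbb{R}_+)$ is the space of bounded continuous functions on $\mathbb{R}_+$ with sup-norm $\|\cdot\|_\infty$. A function $f$ is log-uniformly continuous on $\mathbb{R}_+$ if for every $\varepsilon>0$ there is $\delta>0$ with $|f(u)-f(v)|<\varepsilon$ whenever $|\log u-\log v|\le\delta$, $u,v\in\mathbb{R}_+$. $\mathcal{C}(\mathbb{R}_+)$ denotes the subspace of $CB(\mathbb{R}_+)$ of log-uniformly continuous functions. *)

(* Defs.v *)
From HB Require Import structures.
From mathcomp Require Import all_boot all_order all_algebra.
From mathcomp Require Import all_classical all_reals all_analysis.
Set Implicit Arguments. Unset Strict Implicit. Unset Printing Implicit Defensive.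
Import Order.TTheory GRing.Theory Num.Theory.
Import numFieldNormedType.Exports.
Local Open Scope classical_set_scope.
Local Open Scope ring_scope.

Section Defs.
Variable R : realType.

Definition Rpos : set R := `]0, +oo[.

Definition zpartial (a : int -> R) (N : nat) : R :=
  \sum_(i < (2 * N).+1) a (i%:Z - N%:Z).

(* the sum over k in Z, as the limit of the symmetric partial sums
   (only used for families that are absolutely summable) *)
Definition zsum (a : int -> R) : R := limn (zpartial a).

Definition haar_int (a b : R) (g : R -> R) : R :=
  Rintegral lebesgue_measure `[a, b] (fun t => g t / t).

(* iterated r-fold integral
   int_1^{e^{1/w}} ... int_1^{e^{1/w}} g(t_1 ... t_n) dt_1/t_1 ... dt_n/t_n *)
Fixpoint iter_int (w : R) (n : nat) (g : R -> R) : R :=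
  match n with
  | O => g 1
  | S n' => haar_int 1 (expR (w^-1))
              (fun t => iter_int w n' (fun p => g (t * p)))
  end.

Definition is_kernel (chi : R -> R) : Prop :=
  {within Rpos, continuous chi} /\
  (\int[lebesgue_measure]_(x in Rpos) (`|chi x| / x)%:E < +oo)%E /\
  (exists B, forall x, expR (-1) <= x <= expR 1 -> `|chi x| <= B) /\
  (forall u, 0 < u -> zpartial (fun k => chi (expR (- k%:~R) * u)) @ \oo --> (1 : R)) /\
  (exists M0, forall u, 0 < u -> forall N,
      zpartial (fun k => `|chi (expR (- k%:~R) * u)|) N <= M0) /\
  (forall eps, 0 < eps -> exists g0 : R, forall g, g0 < g -> forall u, 0 < u ->
      zsum (fun k => if g < `|k%:~R - ln u| then `|chi (expR (- k%:~R) * u)| else 0)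
        < eps).

Definition MS_op (chi : R -> R) (w : R) (r : nat) (f : R -> R) (x : R) : R :=
  zsum (fun k => chi (expR (- k%:~R) * x `^ w) *
    (w ^+ r * iter_int w r (fun P =>
       \sum_(1 <= m < r.+1)
          ((-1) ^+ m.+1 * ('C(r, m))%:R * f (expR (k%:~R / w) * P `^ (m%:R / r%:R)))))).

Definition bounded_Rp (f : R -> R) : Prop :=
  exists M, forall x, 0 < x -> `|f x| <= M.

Definition loc_integrable_Rp (f : R -> R) : Prop :=
  forall a b, 0 < a -> a <= b -> lebesgue_measure.-integrable `[a, b] (EFin \o f).

Definition log_unif_cont (f : R -> R) : Prop :=
  forall eps, 0 < eps -> exists delta, 0 < delta /\
    forall u v, 0 < u -> 0 < v -> `|ln u - ln v| <= delta -> `|f u - f v| < eps.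

Definition in_logC (f : R -> R) : Prop :=
  bounded_Rp f /\ {within Rpos, continuous f} /\ log_unif_cont f.

Definition supnorm_Rp (g : R -> R) : \bar R :=
  ereal_sup [set (`|g x|)%:E | x in Rpos].

End Defs.

(* Main.v *)
Require Import Defs.
From HB Require Import structures.
From mathcomp Require Import all_boot all_order all_algebra.
From mathcomp Require Import all_classical all_reals all_analysis.
From mathcomp Require Import ring lra zify.
Import Order.TTheory GRing.Theory Num.Theory.
Import numFieldNormedType.Exports.
Local Open Scope classical_set_scope.
Local Open Scope ring_scope.
Set Implicit Arguments. Unset Strict Implicit. Unset Printing Implicit Defensive.

Section Aux.
Variable R : realType.
Local Notation mu := (@lebesgue_measure R).
Lemma int_mono (D : set R) (f g : R -> \bar R) :
  (forall x, D x -> (0 <= f x)%E) -> (forall x, D x -> (f x <= g x)%E) ->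
  (\int[mu]_(x in D) f x <= \int[mu]_(x in D) g x)%E.
Proof.
move=> f0 fg.
have g0 : forall x, D x -> (0 <= g x)%E by move=> x Dx; exact: le_trans (f0 _ Dx) (fg _ Dx).
rewrite ge0_integralE; last exact: f0. rewrite ge0_integralE; last exact: g0.
apply: le_ereal_sup => _ [h hf <-]; exists h => //= x.
apply: (le_trans (hf x)); rewrite /patch; case: ifP => // /set_mem Dx; exact: fg.
Qed.
Lemma cont_cinv (a t : R) : 0 < t -> {for t, continuous (fun s : R => a / s)}.
Proof.
move=> t0; apply: continuousM; first exact: cst_continuous.
by apply: inv_continuous; rewrite gt_eqF.
Qed.

Lemma int_cinv (a b : R) : 1 < b ->
  (\int[mu]_(t in `[1%R, b]) (a / t)%:E = (a * ln b)%:E)%E.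
Proof.
move=> b1.
have pos : forall t, t \in `[1, b] -> 0 < t.
  by move=> t; rewrite in_itv /= => /andP[t1 _]; exact: lt_le_trans t1.
rewrite (@continuous_FTC2 _ (fun s => a / s) (fun s => a * ln s)) //.
- by rewrite ln1 mulr0 sube0.
- apply: continuous_in_subspaceT => t /set_mem /= tI.
  apply: cont_cinv; apply: pos; exact: tI.
- split.
  + move=> t; rewrite in_itv /= => /andP[t1 _].
    apply: derivableZ; apply: ex_derive; apply: is_derive1_ln; exact: lt_trans t1.
  + apply: cvg_at_right_filter; apply: continuousZl_tmp; apply: continuous_ln; exact: ltr01.
  + apply: cvg_at_left_filter; apply: continuousZl_tmp; apply: continuous_ln; exact: lt_trans b1.
- move=> t; rewrite in_itv /= => /andP[t1 _].
  have t0 : 0 < t by exact: lt_trans t1.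
  rewrite derive1E deriveZ /=; last by apply: ex_derive; exact: is_derive1_ln.
  by rewrite (@derive_val _ _ _ _ _ _ _ (is_derive1_ln t0)).
Qed.
Lemma pos_bounds (y t lo hi : R) : 0 < t -> lo <= y <= hi ->
  Num.max lo 0 / t <= Num.max (y / t) 0 <= Num.max hi 0 / t /\
  Num.max (- hi) 0 / t <= Num.max (- (y / t)) 0 <= Num.max (- lo) 0 / t.
Proof.
move=> t0 /andP[ly yh].
have ti : 0 <= t^-1 by rewrite invr_ge0 ltW.
have e1 : Num.max (y / t) 0 = Num.max y 0 / t by rewrite maxr_pMl // mul0r.
have e2 : Num.max (- (y / t)) 0 = Num.max (- y) 0 / t by rewrite -mulNr maxr_pMl // mul0r.
rewrite e1 e2; split; apply/andP; split; apply: ler_wpM2r => //; apply: le_max2 => //.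
- by rewrite lerN2.
- by rewrite lerN2.
Qed.

Lemma haar_bound (h : R -> R) (b lo hi : R) : 1 < b ->
  (forall t, 1 <= t <= b -> lo <= h t <= hi) ->
  lo * ln b <= haar_int 1 b h <= hi * ln b.
Proof.
move=> b1 hb.
set q := fun t => h t / t.
have -> : haar_int 1 b h = fine (\int[mu]_(t in `[1%R, b]) (EFin \o q) t)%E by [].
rewrite integralE funerpos funerneg.
have Dpos : forall t, `[1%R, b]%classic t -> 0 < t /\ 1 <= t <= b.
  move=> t; rewrite /= in_itv /= => /andP[t1 tb]; split; last by rewrite t1 tb.
  exact: lt_le_trans t1.
have low : forall c (g : R -> R), (forall t, `[1%R, b]%classic t -> c / t <= g t) -> 0 <= c ->
    ((c * ln b)%:E <= \int[mu]_(t in `[1%R, b]) (EFin \o g) t)%E.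
  move=> c g cg c0; rewrite -int_cinv //; apply: int_mono => t Dt /=; rewrite lee_fin.
    by apply: divr_ge0 => //; apply: ltW; case: (Dpos _ Dt).
  exact: cg.
have upp : forall c (g : R -> R), (forall t, `[1%R, b]%classic t -> g t <= c / t) -> (forall t, 0 <= g t) ->
    (\int[mu]_(t in `[1%R, b]) (EFin \o g) t <= (c * ln b)%:E)%E.
  move=> c g cg g0; rewrite -int_cinv //; apply: int_mono => t Dt /=; rewrite lee_fin //.
  exact: cg.
have B := fun t (Dt : `[1%R, b]%classic t) => pos_bounds (proj1 (Dpos t Dt)) (hb t (proj2 (Dpos t Dt))).
have mx0 : forall c : R, 0 <= Num.max c 0 by move=> c; rewrite le_max lexx orbT.
have P1l := low (Num.max lo 0) (q^\+) (fun t Dt => proj1 (andP (proj1 (B t Dt)))) (mx0 _).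
have P1u := upp (Num.max hi 0) (q^\+) (fun t Dt => proj2 (andP (proj1 (B t Dt)))) (funrpos_ge0 q).
have P2l := low (Num.max (- hi) 0) (q^\-) (fun t Dt => proj1 (andP (proj2 (B t Dt)))) (mx0 _).
have P2u := upp (Num.max (- lo) 0) (q^\-) (fun t Dt => proj2 (andP (proj2 (B t Dt)))) (funrneg_ge0 q).
move: P1l P1u P2l P2u.
set I1 := (\int[mu]_(t in _) _)%E.
set I2 := (\int[mu]_(t in _) _)%E.
have I10 : (0 <= I1)%E by apply: integral_ge0 => t _; rewrite lee_fin.
have I20 : (0 <= I2)%E by apply: integral_ge0 => t _; rewrite lee_fin.
move=> P1l P1u P2l P2u.
have f1 : I1 \is a fin_num by rewrite ge0_fin_numE // (le_lt_trans P1u) // ltry.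
have f2 : I2 \is a fin_num by rewrite ge0_fin_numE // (le_lt_trans P2u) // ltry.
move: P1l P1u P2l P2u; rewrite -(fineK f1) -(fineK f2) !lee_fin => P1l P1u P2l P2u.
rewrite -EFinB /=.
have lb0 : 0 <= ln b by apply: ln_ge0; exact: ltW.
have A : forall c : R, c = Num.max c 0 - Num.max (- c) 0.
  by move=> c; rewrite !maxEle; case: (leP c 0) => ?; case: (leP (- c) 0) => ?; lra.
rewrite [in X in X * _ <= _](A lo) [in X in _ <= X * _](A hi).
by apply/andP; split; rewrite mulrBl; apply: lerB.
Qed.
Lemma iter_bound n : forall (w : R) (g : R -> R) (lo hi : R), 0 < w ->
  (forall p, 1 <= p <= expR (n%:R / w) -> lo <= g p <= hi) ->
  lo <= w ^+ n * iter_int w n g <= hi.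
Proof.
elim: n => [|n IH] w g lo hi w0 hg.
  rewrite expr0 mul1r /=; apply: hg; by rewrite mul0r expR0 lexx.
have Wn : 0 < w ^+ n by apply: exprn_gt0.
have b1 : 1 < expR w^-1 by apply: pexpR_gt1; rewrite invr_gt0.
have hb := @haar_bound (fun t => iter_int w n (fun p => g (t * p))) (expR w^-1)
   (lo / w ^+ n) (hi / w ^+ n) b1.
have /hb : forall t, 1 <= t <= expR w^-1 ->
   lo / w ^+ n <= iter_int w n (fun p => g (t * p)) <= hi / w ^+ n.
  move=> t /andP[t1 tb].
  have := IH w (fun p => g (t * p)) lo hi w0.
  have /[swap]/[apply] : forall p, 1 <= p <= expR (n%:R / w) -> lo <= g (t * p) <= hi.
    move=> p /andP[p1 pb]; apply: hg; apply/andP; split; first exact: mulr_ege1.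
    rewrite -natr1 mulrDl mul1r expRD mulrC.
    by apply: ler_pM => //; [exact: le_trans ler01 p1 | exact: le_trans ler01 t1].
  move=> /andP[l u]; apply/andP; split.
    by rewrite (ler_pdivrMr _ _ Wn) mulrC.
  by rewrite ler_pdivlMr // mulrC.
rewrite expRK /= => /andP[l u].
have Wn1 : 0 < w ^+ n * w by apply: mulr_gt0.
rewrite exprSr; apply/andP; split.
  by move: l; rewrite -mulrA -invfM (ler_pdivrMr _ _ Wn1) mulrC.
by move: u; rewrite -mulrA -invfM (ler_pdivlMr _ _ Wn1) mulrC.
Qed.
Implicit Types (a b : int -> R).

Lemma zpartialD a b N : zpartial (fun k => a k + b k) N = zpartial a N + zpartial b N.
Proof. by rewrite /zpartial big_split. Qed.

Lemma zpartialB a b N : zpartial (fun k => a k - b k) N = zpartial a N - zpartial b N.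
Proof. by rewrite /zpartial sumrB. Qed.

Lemma zpartialZ a c N : zpartial (fun k => c * a k) N = c * zpartial a N.
Proof. by rewrite /zpartial mulr_sumr. Qed.

Lemma zpartial_le a b N : (forall k, a k <= b k) -> zpartial a N <= zpartial b N.
Proof. by move=> ab; rewrite /zpartial; apply: ler_sum => i _; exact: ab. Qed.

Lemma zpartial_ge0 a N : (forall k, 0 <= a k) -> 0 <= zpartial a N.
Proof. by move=> a0; rewrite /zpartial; apply: sumr_ge0 => i _; exact: a0. Qed.

Lemma zpartialS a N : zpartial a N.+1 = a (- (N.+1)%:Z) + zpartial a N + a (N.+1)%:Z.
Proof.
rewrite /zpartial.
have -> : ((2 * N.+1).+1 = ((2 * N).+1).+2)%N by rewrite mulnS.
rewrite big_ord_recl big_ord_recr /= -addrA; congr (_ + _).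
  by congr a; rewrite sub0r.
congr (_ + _); last by congr a; rewrite /bump leq0n add1n; lia.
by apply: eq_bigr => i _; congr a; rewrite /bump leq0n add1n; lia.
Qed.

Lemma zpartial_nd a : (forall k, 0 <= a k) -> nondecreasing_seq (zpartial a).
Proof.
move=> a0; apply/nondecreasing_seqP => N; rewrite zpartialS.
by rewrite -addrA addrCA lerDl addr_ge0.
Qed.

Lemma zcvg_nonneg a M : (forall k, 0 <= a k) -> (forall N, zpartial a N <= M) ->
  cvgn (zpartial a) /\ (forall N, zpartial a N <= zsum a) /\ zsum a <= M.
Proof.
move=> a0 aM.
have nd := zpartial_nd a0.
have cv : cvgn (zpartial a).
  apply: nondecreasing_is_cvgn => //; exists M => _ [N _ <-]; exact: aM.
split => //; split; first exact: nondecreasing_cvgn_le.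
by apply: limr_le => //; near=> N; exact: aM.
Unshelve. all: by end_near.
Qed.

Lemma zcvg_dom a b M : (forall k, 0 <= a k) -> (forall N, zpartial a N <= M) ->
  (forall k, `|b k| <= a k) -> cvgn (zpartial b).
Proof.
move=> a0 aM ba.
pose bp := fun k => Num.max (b k) 0.
pose bn := fun k => Num.max (- b k) 0.
have bpn : forall k, b k = bp k - bn k.
  by move=> k; rewrite /bp /bn !maxEle; case: (leP (b k) 0) => ?; case: (leP (- b k) 0) => ?; lra.
have Hp : forall k, 0 <= bp k <= a k.
  move=> k; have := ba k; rewrite /bp !maxEle; case: (leP (b k) 0) => ?; rewrite ?lexx ?(a0 k) //.
  by move/(le_trans (ler_norm _)) => ->; rewrite ltW.
have Hn : forall k, 0 <= bn k <= a k.
  move=> k; have := ba k; rewrite /bn !maxEle; case: (leP (- b k) 0) => ?; rewrite ?lexx ?(a0 k) //.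
  by rewrite -normrN; move/(le_trans (ler_norm _)) => ->; rewrite ltW.
have [cp _] := @zcvg_nonneg bp M (fun k => proj1 (andP (Hp k)))
   (fun N => le_trans (zpartial_le N (fun k => proj2 (andP (Hp k)))) (aM N)).
have [cn _] := @zcvg_nonneg bn M (fun k => proj1 (andP (Hn k)))
   (fun N => le_trans (zpartial_le N (fun k => proj2 (andP (Hn k)))) (aM N)).
have -> : zpartial b = fun N => zpartial bp N - zpartial bn N.
  by apply/funext => N; rewrite -zpartialB; congr zpartial; apply/funext => k; exact: bpn.
apply: is_cvgB; [exact: cp | exact: cn].
Qed.

Lemma lim_normbound (u : R ^nat) c : cvgn u -> (forall N, `|u N| <= c) -> `|limn u| <= c.
Proof.
move=> cu uc; rewrite -lim_norm //; apply: limr_le; first exact: is_cvg_norm.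
by near=> N; exact: uc.
Unshelve. all: by end_near.
Qed.
Lemma binom_alt r : (0 < r)%N ->
  \sum_(1 <= m < r.+1) (-1) ^+ m.+1 * ('C(r, m))%:R = 1 :> R.
Proof.
move=> r0.
have H : \sum_(0 <= i < r.+1) (-1) ^+ i * ('C(r, i))%:R = 0 :> R.
  rewrite big_mkord; have := exprDn (1 : R) (-1) r; rewrite subrr expr0n gtn_eqF // => H.
  rewrite [RHS](_ : _ = (false%:R : R)) // H.
  by apply: eq_bigr => i _; rewrite expr1n mul1r mulr_natr.
rewrite big_ltn // expr0 mul1r bin0 in H.
under eq_bigr => m _ do rewrite exprS mulN1r mulNr.
rewrite sumrN; apply/eqP; rewrite eqr_oppLR; apply/eqP.
by move: H; set s := (\sum_(_ <= _ < _) _); move=> H; lra.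
Qed.
Definition Gfun (f : R -> R) (w : R) (r : nat) (kk : R) (P : R) :=
  \sum_(1 <= m < r.+1)
     ((-1) ^+ m.+1 * ('C(r, m))%:R * f (expR (kk / w) * P `^ (m%:R / r%:R))).

Definition Ssum (r : nat) : R := \sum_(1 <= m < r.+1) ('C(r, m))%:R.

Lemma Ssum_ge0 r : 0 <= Ssum r.
Proof. by apply: sumr_ge0 => m _; exact: ler0n. Qed.

Lemma normsign n : `|(-1) ^+ n : R| = 1.
Proof. by rewrite normrX normrN1 expr1n. Qed.

Lemma G_bound1 f M w r kk P : (forall y, 0 < y -> `|f y| <= M) -> 0 < P ->
  `|Gfun f w r kk P| <= Ssum r * M.
Proof.
move=> fM P0; rewrite /Gfun /Ssum mulr_suml.
apply: (le_trans (ler_norm_sum _ _ _)); apply: ler_sum => m _.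
rewrite !normrM normsign mul1r ger0_norm ?ler0n //.
apply: ler_wpM2l; first exact: ler0n.
apply: fM; apply: mulr_gt0; [exact: expR_gt0 | exact: powR_gt0].
Qed.

Lemma G_bound2 f (x w : R) r kk P eps delta : (0 < r)%N -> 0 < x -> 0 < w ->
  (forall y, 0 < y -> `|ln y - ln x| <= delta -> `|f y - f x| <= eps) ->
  `|kk / w - ln x| <= delta / 2 -> r%:R / w <= delta / 2 ->
  1 <= P <= expR (r%:R / w) ->
  `|Gfun f w r kk P - f x| <= Ssum r * eps.
Proof.
move=> r0 x0 w0 LC hk hr /andP[P1 Pb].
have P0 : 0 < P by exact: lt_le_trans P1.
have -> : f x = \sum_(1 <= m < r.+1) ((-1) ^+ m.+1 * ('C(r, m))%:R * f x).
  by rewrite -mulr_suml binom_alt // mul1r.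
rewrite /Gfun -sumrB /Ssum mulr_suml.
apply: (le_trans (ler_norm_sum _ _ _)); apply: ler_sum_nat => m /andP[m1 mr].
rewrite -mulrBr !normrM normsign mul1r ger0_norm ?ler0n //.
apply: ler_wpM2l; first exact: ler0n.
have e0 : 0 < expR (kk / w) by exact: expR_gt0.
have p0 : 0 < P `^ (m%:R / r%:R) by exact: powR_gt0.
apply: LC; first exact: mulr_gt0.
rewrite lnM ?posrE // expRK ln_powR.
have lP0 : 0 <= ln P by exact: ln_ge0.
have lPb : ln P <= r%:R / w by rewrite -(expRK (r%:R / w)) ler_ln ?posrE // expR_gt0.
have mr1 : m%:R / r%:R <= 1 :> R.
  by rewrite ler_pdivrMr ?ltr0n // mul1r ler_nat -ltnS.
have mr0 : 0 <= m%:R / r%:R :> R by apply: divr_ge0; exact: ler0n.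
have t1 : m%:R / r%:R * ln P <= delta / 2.
  apply: le_trans hr; apply: le_trans lPb; exact: ler_piMl.
have t0 : 0 <= m%:R / r%:R * ln P by exact: mulr_ge0.
rewrite addrAC (le_trans (ler_normD _ _)) // (ger0_norm t0).
by rewrite [delta]splitr lerD.
Qed.
Lemma core (chi f : R -> R) (r : nat) (M M0 x w eps delta eta : R) :
  (0 < r)%N -> (forall y, 0 < y -> `|f y| <= M) ->
  (forall u, 0 < u -> forall N, zpartial (fun k => `|chi (expR (- k%:~R) * u)|) N <= M0) ->
  (forall u, 0 < u -> zpartial (fun k => chi (expR (- k%:~R) * u)) @ \oo --> (1 : R)) ->
  0 < x -> 0 < w -> 0 <= eps -> 0 < delta ->
  (forall y, 0 < y -> `|ln y - ln x| <= delta -> `|f y - f x| <= eps) ->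
  r%:R / w <= delta / 2 ->
  zsum (fun k => if w * delta / 2 < `|k%:~R - ln (x `^ w)|
                 then `|chi (expR (- k%:~R) * x `^ w)| else 0) <= eta ->
  `|MS_op chi w r f x - f x| <= Ssum r * eps * M0 + (Ssum r * M + M) * eta.
Proof.
move=> r0 fM hM0 h1 x0 w0 e0 d0 LC hr htail.
set u := x `^ w.
have u0 : 0 < u by exact: powR_gt0.
have lnu : ln u = w * ln x by rewrite /u ln_powR.
set a := fun k : int => chi (expR (- k%:~R) * u).
set B := fun k : int => w ^+ r * iter_int w r (Gfun f w r k%:~R).
have MSe : MS_op chi w r f x = zsum (fun k => a k * B k) by [].
have M0' : 0 <= M by apply: le_trans (fM x x0).
set S := Ssum r.
have S0 : 0 <= S by exact: Ssum_ge0.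
have Bb : forall k, `|B k| <= S * M.
  move=> k; rewrite ler_norml; apply: iter_bound => // p /andP[p1 _].
  rewrite -ler_norml; apply: G_bound1 => //; exact: lt_le_trans p1.
have Bn : forall k, `|k%:~R - ln u| <= w * delta / 2 -> `|B k - f x| <= S * eps.
  move=> k hk; rewrite ler_distl; apply: iter_bound => // p hp.
  rewrite -ler_distl; apply: (G_bound2 r0 x0 w0 LC _ hr hp).
  have -> : k%:~R / w - ln x = (k%:~R - ln u) / w.
    by rewrite lnu; field; rewrite gt_eqF.
  have wi : 0 <= w^-1 by rewrite invr_ge0 ltW.
  rewrite normrM (ger0_norm wi) (ler_pdivrMr _ _ w0).
  by rewrite [delta / 2 * w]mulrC mulrA.
set tail := fun k : int => if w * delta / 2 < `|k%:~R - ln u| then `|a k| else 0.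
have tail0 : forall k, 0 <= tail k by move=> k; rewrite /tail; case: ifP.
have taila : forall k, tail k <= `|a k| by move=> k; rewrite /tail; case: ifP.
have [ctail [tailN tailS]] := @zcvg_nonneg tail M0 tail0
   (fun N => le_trans (zpartial_le N taila) (hM0 u u0 N)).
set b := fun k => a k * (B k - f x).
have bd : forall k, `|b k| <= `|a k| * (S * eps) + (S * M + M) * tail k.
  move=> k; rewrite /b /tail normrM; case: ifP => hk.
    rewrite [(S * M + M) * _]mulrC.
    apply: (@le_trans _ _ (`|a k| * (S * M + M))); last first.
      by rewrite lerDr; apply: mulr_ge0 => //; exact: mulr_ge0.
    apply: ler_wpM2l; first exact: normr_ge0.
    apply: le_trans (ler_normD _ _) _; rewrite normrN; apply: lerD => //; exact: fM.
  rewrite mulr0 addr0; apply: ler_wpM2l; first exact: normr_ge0.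
  by apply: Bn; rewrite leNgt hk.
have bdom : forall k, `|b k| <= `|a k| * (S * M + M).
  move=> k; rewrite /b normrM; apply: ler_wpM2l; first exact: normr_ge0.
  apply: le_trans (ler_normD _ _) _; rewrite normrN; apply: lerD => //; exact: fM.
have cb : cvgn (zpartial b).
  apply: (@zcvg_dom (fun k => `|a k| * (S * M + M)) b (M0 * (S * M + M))) => //.
    by move=> k; apply: mulr_ge0 => //; apply: addr_ge0 => //; exact: mulr_ge0.
  move=> N; rewrite /zpartial -mulr_suml; apply: ler_wpM2r.
    by apply: addr_ge0 => //; exact: mulr_ge0.
  exact: hM0.
have zb : `|zsum b| <= S * eps * M0 + (S * M + M) * eta.
  apply: lim_normbound => // N.
  rewrite /zpartial; apply: le_trans (ler_norm_sum _ _ _) _.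
  apply: le_trans (ler_sum _ (fun i _ => bd _)) _.
  rewrite big_split /= -mulr_suml -mulr_sumr; apply: lerD.
    rewrite mulrC; apply: ler_wpM2l; first exact: mulr_ge0.
    exact: hM0.
  apply: ler_wpM2l; first by apply: addr_ge0 => //; exact: mulr_ge0.
  exact: le_trans (tailN N) htail.
have ep : zpartial (fun k => a k * B k) = (fun N => zpartial b N + f x * zpartial a N).
  apply/funext => N; rewrite -zpartialZ -zpartialD; congr zpartial; apply/funext => k.
  by rewrite /b; ring.
have lim1 : zpartial (fun k => a k * B k) @ \oo --> zsum b + f x * 1.
  rewrite ep; apply: cvgD; first exact: cb.
  by apply: cvgMr; exact: h1.
by rewrite MSe /zsum (cvg_lim _ lim1) // mulr1 addrK.
Qed.
Lemma half_bound (A e : R) : 0 <= A -> 0 < e -> A * (e / (2 * (A + 1))) <= e / 2.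
Proof.
move=> A0 e0.
have A1 : 0 < 2 * (A + 1) by apply: mulr_gt0 => //; apply: ltr_wpDl.
rewrite mulrA ler_pdivrMr //.
have -> : e / 2 * (2 * (A + 1)) = A * e + e by field.
by rewrite mulrC lerDl ltW.
Qed.

Lemma eventually_close (chi f : R -> R) (r : nat) (M : R) :
  (0 < r)%N -> (forall y, 0 < y -> `|f y| <= M) -> is_kernel chi ->
  forall e, 0 < e -> exists eps, 0 < eps /\ forall delta, 0 < delta ->
  \forall w \near +oo, forall x, 0 < x ->
    (forall y, 0 < y -> `|ln y - ln x| <= delta -> `|f y - f x| <= eps) ->
    `|MS_op chi w r f x - f x| <= e.
Proof.
move=> r0 fM [_ [_ [_ [h1 [[M0 hM0] h3]]]]] e e0.
have M00 : 0 <= M0.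
  exact: le_trans (zpartial_ge0 0 (fun k => normr_ge0 _)) (hM0 1 ltr01 0%N).
have Mp : 0 <= M by exact: le_trans (normr_ge0 _) (fM 1 ltr01).
set S := Ssum r.
have S0 : 0 <= S by exact: Ssum_ge0.
set A := S * M0.
have A0 : 0 <= A by exact: mulr_ge0.
have A1 : 0 < 2 * (A + 1) by apply: mulr_gt0 => //; apply: ltr_wpDl.
exists (e / (2 * (A + 1))); split; first exact: divr_gt0.
move=> delta d0.
set C := S * M + M.
have C0 : 0 <= C by apply: addr_ge0 => //; exact: mulr_ge0.
have C1 : 0 < 2 * (C + 1) by apply: mulr_gt0 => //; apply: ltr_wpDl.
have eta0 : 0 < e / (2 * (C + 1)) by exact: divr_gt0.
have [g0 hg0] := h3 _ eta0.
near=> w => x x0 LC.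
have w0 : 0 < w by near: w; apply: nbhs_pinfty_gt; rewrite num_real.
have hw1 : 2 * r%:R / delta <= w by near: w; apply: nbhs_pinfty_ge; rewrite num_real.
have hw2 : 2 * g0 / delta < w by near: w; apply: nbhs_pinfty_gt; rewrite num_real.
have hr : r%:R / w <= delta / 2.
  rewrite ler_pdivrMr //; move: hw1; rewrite ler_pdivrMr // => hw1; lra.
have hg : g0 < w * delta / 2.
  move: hw2; rewrite ltr_pdivrMr // => hw2; lra.
have u0 : 0 < x `^ w by exact: powR_gt0.
apply: le_trans (core r0 fM hM0 h1 x0 w0 (ltW (divr_gt0 e0 A1)) d0 LC hr
   (ltW (hg0 _ hg _ u0))) _.
rewrite (mulrAC S) -/A [X in _ <= X](splitr e); apply: lerD; first exact: half_bound.
exact: half_bound.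
Unshelve. all: by end_near.
Qed.
Lemma Rpos_iff (x : R) : Rpos x <-> 0 < x.
Proof. by rewrite /Rpos /= in_itv /= andbT. Qed.

Lemma sup_bound (g : R -> R) (e : R) : (forall x, 0 < x -> `|g x| <= e) ->
  (0 <= supnorm_Rp g)%E /\ (supnorm_Rp g <= e%:E)%E.
Proof.
move=> hg; split.
  apply: (@le_trans _ _ (`|g 1|)%:E); first by rewrite lee_fin normr_ge0.
  by apply: ereal_sup_ubound; exists 1 => //; apply/Rpos_iff; exact: ltr01.
apply: ge_ereal_sup => _ [x Rx <-]; rewrite lee_fin; apply: hg; exact/Rpos_iff.
Qed.
End Aux.

Unset Implicit Arguments.

Theorem theorem1 (R : realType) (r : nat) (hr : (0 < r)%N) (chi : R -> R)
  (hchi : is_kernel chi) :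
  (forall f : R -> R, bounded_Rp f -> loc_integrable_Rp f ->
     forall x, 0 < x -> {for x, continuous f} ->
       MS_op chi w r f x @[w --> +oo] --> f x) /\
  (forall f : R -> R, in_logC f ->
     supnorm_Rp (fun x => MS_op chi w r f x - f x) @[w --> +oo] --> 0%E).
Proof.
split.
- move=> f [M fM] _ x x0 cf.
  apply/cvgrPdist_le => e e0.
  have [eps [eps0 H]] := eventually_close hr fM hchi e0.
  have hc : {for ln x, continuous (f \o expR)}.
    apply: continuous_comp; first exact: continuous_expR.
    by rewrite /= lnK ?posrE.
  move/cvgrPdist_lt: hc => /(_ eps eps0) /nbhs_ballP [d d0 hd].
  have LC : forall y, 0 < y -> `|ln y - ln x| <= d / 2 -> `|f y - f x| <= eps.
    move=> y y0 hy.
    have : ball (ln x) d (ln y).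
      rewrite /ball /= distrC; apply: le_lt_trans hy _.
      by rewrite ltr_pdivrMr // ltr_pMr // ltr1n.
    move/hd => /= h; rewrite distrC; apply: ltW; move: h; rewrite !lnK ?posrE //.
  have d2 : 0 < d / 2 by exact: divr_gt0.
  apply: filterS (H _ d2) => w Hw; rewrite distrC; exact: Hw x x0 LC.
- move=> f [[M fM] [_ hu]].
  have key : forall e, 0 < e -> \forall w \near +oo, forall x, 0 < x ->
      `|MS_op chi w r f x - f x| <= e.
    move=> e e0; have [eps [eps0 H]] := eventually_close hr fM hchi e0.
    have [d [d0 hd]] := hu eps eps0.
    apply: filterS (H d d0) => w Hw x x0; apply: (Hw x x0) => y y0 hy.
    by apply: ltW; apply: hd.
  apply/fine_cvgP; split.
    apply: filterS (key 1 ltr01) => w Hw.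
    have [s0 s1] := sup_bound Hw.
    by rewrite ge0_fin_numE // (le_lt_trans s1) // ltry.
  apply/cvgrPdist_le => e e0; apply: filterS (key e e0) => w Hw.
  have [s0 s1] := sup_bound Hw.
  have fin : supnorm_Rp (fun x => MS_op chi w r f x - f x) \is a fin_num.
    by rewrite ge0_fin_numE // (le_lt_trans s1) // ltry.
  move: s0 s1; rewrite /= -(fineK fin) !lee_fin => s0 s1.
  by rewrite sub0r normrN ger0_norm.
Qed.
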